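(* Let $M$ be a bicomplex Hilbert space (as defined below) and let $A:M\to M$ be a bicomplex self-adjoint operator, i.e. a $\mathbb{T}$-linear operator with $A=A^*$. Suppose $A|\psi\rangle=\lambda|\psi\rangle$ with $\lambda\in\mathbb{T}$ and $|\psi\rangle\in M$ not in the null-cone, i.e. $|\psi\rangle=\mathbf{e_1}|\psi_{\mathbf{e_1}}\rangle+\mathbf{e_2}|\psi_{\mathbf{e_2}}\rangle$ with $|\psi_{\mathbf{e_1}}\rangle\ne0$ and $|\psi_{\mathbf{e_2}}\rangle\ne0$. Then $\lambda\in\mathbb{D}$, i.e. $\lambda$ is a hyperbolic number.
   Context: Bicomplex numbers: $\mathbb{T}=\{z_1+z_2\mathbf{i_2}: z_1,z_2\in\mathbb{C}(\mathbf{i_1})\}$, $\mathbb{C}(\mathbf{i_1})=\{x+y\mathbf{i_1}: x,y\in\mathbb{R}\}$, $\mathbf{i_1}^2=\mathbf{i_2}^2=-1$, $\mathbf{i_1}\mathbf{i_2}=\mathbf{i_2}\mathbf{i_1}=\mathbf{j}$, $\mathbf{j}^2=1$ (commutative). Hyperbolic numbers $\mathbb{D}=\{x+y\mathbf{j}:x,y\in\mathbb{R}\}$. Idempotents $\mathbf{e_1}=(1+\mathbf{j})/2$, $\mathbf{e_2}=(1-\mathbf{j})/2$. Conjugation: $(z_1+z_2\mathbf{i_2})^{\dagger_3}=\overline{z_1}-\overline{z_2}\mathbf{i_2}$. $\mathbb{D}^+=\{a\mathbf{e_1}+b\mathbf{e_2}: a,b\ge 0\}$. $M$ is a free $\mathbb{T}$-module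 with finite basis $\{|m_1\rangle,\dots,|m_n\rangle\}$, $V=\{\sum x_l|m_l\rangle: x_l\in\mathbb{C}(\mathbf{i_1})\}$; for $|\phi\rangle=\sum x_l|m_l\rangle$ with $x_l=x_{1l}\mathbf{e_1}+x_{2l}\mathbf{e_2}$, $x_{kl}\in\mathbb{C}(\mathbf{i_1})$, set $|\phi_{\mathbf{e_k}}\rangle=\sum_l x_{kl}|m_l\rangle\in V$, so $|\phi\rangle=\mathbf{e_1}|\phi_{\mathbf{e_1}}\rangle+\mathbf{e_2}|\phi_{\mathbf{e_2}}\rangle$ uniquely. $M$ carries a bicomplex scalar product $(\cdot,\cdot):M\times M\to\mathbb{T}$: additive in the second argument, $(|\phi\rangle,\alpha|\psi\rangle)=\alpha(|\phi\rangle,|\psi\rangle)$ for $\alpha\in\mathbb{T}$, $(|\phi\rangle,|\psi\rangle)=(|\psi\rangle,|\phi\rangle)^{\dagger_3}$, $(|\phi\rangle,|\phi\rangle)=0\iff|\phi\rangle=0$, hyperbolic positive ($(|\phi\rangle,|\phi\rangle)\in\mathbb{D}^+$) and closed on $V$ ($(|\phi\rangle,|\psi\rangle)\in\mathbb{C}(\mathbf{i_1})$ for $|\phi\rangle,|\psi\rangle\in V$); ''bicomplex Hilbert space'' means moreover $M$ is complete for the norm $\|\phi\|=\big((\|\phi_{\mathbf{e_1}}\|^2+\|\phi_{\mathbf{e_2}}\|^2)/2\big)^{1/2}$, $\|\chi\|=(\chi,\chi)^{1/2}$ on $V$. The bicomplex adjoint $A^*$ of a $\mathbb{T}$-linear $A$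 is the operator with $(A|\psi\rangle,|\phi\rangle)=(|\psi\rangle,A^*|\phi\rangle)$ for all $|\phi\rangle,|\psi\rangle\in M$. *)

(* Defs.v *)
(* T     := (R[i])[i], i.e. pairs z1 + z2 i2 with z1 z2 in C(i1) and i2^2 = -1. *)
From HB Require Import structures.
From mathcomp Require Import all_boot all_order all_algebra.
From mathcomp Require Import reals.
From mathcomp.real_closed Require Import complex.

Set Implicit Arguments.
Unset Strict Implicit.
Unset Printing Implicit Defensive.

Import Order.TTheory GRing.Theory Num.Theory.
Local Open Scope ring_scope.
Local Open Scope complex_scope.

Section Bicomplex.
Variable R : realType.

Definition Ci1 := R[i].
Definition bicomplex := (R[i])[i].

Definition bcC (z : R[i]) : bicomplex := Complex z 0.
Definition bcR (x : R) : bicomplex := bcC (x%:C).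

Definition bi1 : bicomplex := bcC 'i.
Definition bi2 : bicomplex := Complex 0 1.
Definition bj : bicomplex := bi1 * bi2.

Definition be1 : bicomplex := bcR (2^-1) * (1 + bj).
Definition be2 : bicomplex := bcR (2^-1) * (1 - bj).

Definition conj3 (z : bicomplex) : bicomplex :=
  let: z1 +i* z2 := z in Complex (Num.conj z1) (- Num.conj z2).

Definition inCi1 (z : bicomplex) : Prop := exists w : R[i], z = bcC w.

Definition inD (z : bicomplex) : Prop :=
  exists x y : R, z = bcR x + bcR y * bj.

Definition inDplus (z : bicomplex) : Prop :=
  exists a b : R, 0 <= a /\ 0 <= b /\ z = bcR a * be1 + bcR b * be2.

(* The free T-module M with finite basis |m_1>, ..., |m_n> is represented
   by its coordinate space T^n (column vectors); |m_l> is the l-th standard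
   basis vector. *)
Definition Mod (n : nat) := 'cV[bicomplex]_n.

Definition embV n (v : 'cV[R[i]]_n) : Mod n := map_mx bcC v.

Definition inV n (phi : Mod n) : Prop := forall l, inCi1 (phi l 0).

(* idempotent components: z1 + z2 i2 = (z1 - i1 z2) e1 + (z1 + i1 z2) e2 *)
Definition idem1 (z : bicomplex) : R[i] := let: z1 +i* z2 := z in z1 - 'i * z2.
Definition idem2 (z : bicomplex) : R[i] := let: z1 +i* z2 := z in z1 + 'i * z2.

Definition comp_e1 n (phi : Mod n) : Mod n := embV (map_mx idem1 phi).
Definition comp_e2 n (phi : Mod n) : Mod n := embV (map_mx idem2 phi).

Record bicomplex_scalar_product n (sp : Mod n -> Mod n -> bicomplex) : Prop := {
  sp_add2 : forall phi psi chi, sp phi (psi + chi) = sp phi psi + sp phi chi;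
  sp_scale2 : forall (alpha : bicomplex) phi psi, sp phi (alpha *: psi) = alpha * sp phi psi;
  sp_conj : forall phi psi, sp phi psi = conj3 (sp psi phi);
  sp_definite : forall phi, sp phi phi = 0 <-> phi = 0;
  sp_hyp_pos : forall phi, inDplus (sp phi phi);
  sp_closed_V : forall phi psi, inV phi -> inV psi -> inCi1 (sp phi psi)
}.

(* norm on V : ||chi|| = (chi,chi)^{1/2}; (chi,chi) lies in C(i1) and D^+,
   hence is a nonnegative real, its first C(i1)-component's real part *)
Definition normV n (sp : Mod n -> Mod n -> bicomplex) (chi : Mod n) : R :=
  let: z1 +i* _ := sp chi chi in let: a +i* _ := z1 in Num.sqrt a.

Definition normM n (sp : Mod n -> Mod n -> bicomplex) (phi : Mod n) : R :=
  Num.sqrt ((normV sp (comp_e1 phi) ^+ 2 + normV sp (comp_e2 phi) ^+ 2) / 2%:R).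

Definition complete_for n (nrm : Mod n -> R) : Prop :=
  forall u : nat -> Mod n,
    (forall eps : R, 0 < eps -> exists N : nat, forall p q : nat,
        (N <= p)%N -> (N <= q)%N -> nrm (u p - u q) < eps) ->
    exists l : Mod n, forall eps : R, 0 < eps -> exists N : nat, forall p : nat,
        (N <= p)%N -> nrm (u p - l) < eps.

Definition bicomplex_Hilbert n (sp : Mod n -> Mod n -> bicomplex) : Prop :=
  bicomplex_scalar_product sp /\ complete_for (normM sp).

Definition T_linear n (A : Mod n -> Mod n) : Prop :=
  (forall phi psi, A (phi + psi) = A phi + A psi) /\
  (forall (alpha : bicomplex) phi, A (alpha *: phi) = alpha *: A phi).

Definition is_adjoint n (sp : Mod n -> Mod n -> bicomplex) (A B : Mod n -> Mod n) : Prop :=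
  forall phi psi, sp (A psi) phi = sp psi (B phi).

Definition self_adjoint n (sp : Mod n -> Mod n -> bicomplex) (A : Mod n -> Mod n) : Prop :=
  T_linear A /\ is_adjoint sp A A.

End Bicomplex.

(* Main.v *)
Require Import Defs.
From HB Require Import structures.
From mathcomp Require Import all_boot all_order all_algebra.
From mathcomp Require Import reals.
From mathcomp.real_closed Require Import complex.
From mathcomp Require Import ring lra.
Import Order.TTheory GRing.Theory Num.Theory.
Local Open Scope ring_scope.
Section S.
Variable R : realType.
Implicit Types a b c d : R[i].
Lemma mulE a b c d : (Complex a b : bicomplex R) * Complex c d = Complex (a*c - b*d) (a*d + b*c).
Proof. by []. Qed.
Lemma addE a b c d : (Complex a b : bicomplex R) + Complex c d = Complex (a+c) (b+d).
Proof. by []. Qed.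
Lemma oppE a b : - (Complex a b : bicomplex R) = Complex (-a) (-b).
Proof. by []. Qed.
Lemma oneE : (1 : bicomplex R) = Complex 1 0. Proof. by []. Qed.
Lemma zeroE : (0 : bicomplex R) = Complex 0 0. Proof. by []. Qed.
Lemma mulE' (a b c d : R) : (Complex a b : R[i]) * Complex c d = Complex (a*c - b*d) (a*d + b*c).
Proof. by []. Qed.
Lemma addE' (a b c d : R) : (Complex a b : R[i]) + Complex c d = Complex (a+c) (b+d).
Proof. by []. Qed.
Lemma oppE' (a b : R) : - (Complex a b : R[i]) = Complex (-a) (-b).
Proof. by []. Qed.
Lemma oneE' : (1 : R[i]) = Complex 1 0. Proof. by []. Qed.
Lemma zeroE' : (0 : R[i]) = Complex 0 0. Proof. by []. Qed.
Lemma iE : ('i : R[i]) = Complex 0 1. Proof. by []. Qed.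
Lemma conjE' (a b : R) : Num.conj (Complex a b : R[i]) = Complex a (-b).
Proof. by []. Qed.
Lemma eq4 (a b c d a' b' c' d' : R) : a = a' -> b = b' -> c = c' -> d = d' ->
  (Complex (Complex a b) (Complex c d) : bicomplex R) = Complex (Complex a' b') (Complex c' d').
Proof. by move=> -> -> -> ->. Qed.

Ltac bsimp := rewrite /be1 /be2 /bcR /bcC /bj /bi1 /bi2 /conj3 ?oneE ?zeroE ?iE ?oneE' ?zeroE';
  rewrite ?(mulE, addE, oppE); rewrite ?(mulE', addE', oppE', conjE').

Lemma e1e1 : be1 R * be1 R = be1 R.
Proof. bsimp. apply: eq4; by field. Qed.
Lemma e1e2 : be1 R * be2 R = 0.
Proof. bsimp. apply: eq4; by field. Qed.
Lemma e2e2 : be2 R * be2 R = be2 R.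
Proof. bsimp. apply: eq4; by field. Qed.
Lemma e1pe2 : be1 R + be2 R = 1.
Proof. bsimp. apply: eq4; by field. Qed.
Lemma ce1 : conj3 (be1 R) = be1 R.
Proof. bsimp. apply: eq4; by field. Qed.
Lemma ce2 : conj3 (be2 R) = be2 R.
Proof. bsimp. apply: eq4; by field. Qed.
Lemma conj3M (x y : bicomplex R) : conj3 (x * y) = conj3 x * conj3 y.
Proof. case: x => [[a b] [c d]]; case: y => [[a' b'] [c' d']]. bsimp. apply: eq4; ring. Qed.
Lemma conj3K (x : bicomplex R) : conj3 (conj3 x) = x.
Proof. case: x => [[a b] [c d]]. bsimp. apply: eq4; ring. Qed.
Lemma bcCM c d : bcC c * bcC d = bcC (c * d) :> bicomplex R.
Proof. by rewrite mulE /bcC !mul0r !mulr0 subr0 addr0. Qed.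
Lemma conj_real (x : bicomplex R) : x = conj3 x -> inD x.
Proof. case: x => [[a b] [c d]] /=; bsimp. case=> Hb Hc.
exists a, d. bsimp. apply: eq4; lra. Qed.
Lemma conj3D (x y : bicomplex R) : conj3 (x + y) = conj3 x + conj3 y.
Proof. case: x => [[a b] [c d]]; case: y => [[a' b'] [c' d']]. bsimp. apply: eq4; ring. Qed.

Lemma e2e1 : be2 R * be1 R = 0.
Proof. by rewrite mulrC e1e2. Qed.

Lemma proj1_lem (x y z t : bicomplex R) :
  be1 R * (be1 R * (be1 R * x + be2 R * y) + be2 R * (be1 R * z + be2 R * t)) = be1 R * x.
Proof.
move: e1e1 e1e2 e2e1 e2e2; generalize (be1 R) (be2 R) => a b h11 h12 h21 h22.
by rewrite !mulrDr !mulrA; rewrite ?(h11,h12,h21,h22,mul0r,add0r,addr0).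
Qed.

Lemma proj2_lem (x y z t : bicomplex R) :
  be2 R * (be1 R * (be1 R * x + be2 R * y) + be2 R * (be1 R * z + be2 R * t)) = be2 R * t.
Proof.
move: e1e1 e1e2 e2e1 e2e2; generalize (be1 R) (be2 R) => a b h11 h12 h21 h22.
by rewrite !mulrDr !mulrA; rewrite ?(h11,h12,h21,h22,mul0r,add0r,addr0).
Qed.
End S.

Theorem mainTheorem20 (R : realType) (n : nat)
    (sp : Mod R n -> Mod R n -> bicomplex R)
    (A : Mod R n -> Mod R n) (lambda : bicomplex R) (psi : Mod R n) :
  bicomplex_Hilbert sp ->
  self_adjoint sp A ->
  A psi = lambda *: psi ->
  (exists psi1 psi2 : 'cV[R[i]]_n,
      psi = be1 R *: embV psi1 + be2 R *: embV psi2 /\ psi1 != 0 /\ psi2 != 0) ->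
  inD lambda.
Proof.
move=> [H _] [_ Hadj] Hev [psi1 [psi2 [Hpsi [n1 n2]]]].
have add1 : forall x y z, sp (x + y) z = sp x z + sp y z.
  by move=> x y z; rewrite (sp_conj H) (sp_add2 H) conj3D -!(sp_conj H).
have sc1 : forall a x z, sp (a *: x) z = conj3 a * sp x z.
  by move=> a x z; rewrite (sp_conj H) (sp_scale2 H) conj3M -!(sp_conj H).
have emb0 : forall p : 'cV[R[i]]_n, p != 0 -> embV p != 0.
  move=> p; apply: contra => /eqP E; apply/eqP/matrixP => i j.
  by have := congr1 (fun m : Mod R n => m i j) E; rewrite /embV !mxE => -[].
have embin : forall p : 'cV[R[i]]_n, inV (embV p).
  by move=> p l; exists (p l 0); rewrite /embV mxE.
set s := sp psi psi.
have Hs : (lambda - conj3 lambda) * s = 0.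
  have := Hadj psi psi; rewrite Hev sc1 (sp_scale2 H) => E.
  by rewrite mulrBl /s E subrr.
set v1 := embV psi1; set v2 := embV psi2.
have Es : s = be1 R * (be1 R * sp v1 v1 + be2 R * sp v1 v2)
            + be2 R * (be1 R * sp v2 v1 + be2 R * sp v2 v2).
  by rewrite /s {1 2}Hpsi !add1 !sc1 !(sp_add2 H) !(sp_scale2 H) ce1 ce2 !mulrDr.
set d := lambda - conj3 lambda.
have key : forall (e : bicomplex R) p, p != 0 -> d * (e * sp (embV p) (embV p)) = 0 -> d * e = 0.
  move=> e p np E.
  have [c Ec] := sp_closed_V H (embin p) (embin p).
  have c0 : c != 0.
    apply: contra (emb0 p np) => /eqP c0; apply/eqP; apply/(sp_definite H).
    by rewrite Ec c0.
  have : d * e * (bcC c * bcC c^-1) = 0 by rewrite mulrA -[d * e * _]mulrA -Ec E mul0r.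
  by rewrite bcCM mulfV // mulr1.
have d1 : d * be1 R = 0.
  apply: (key _ psi1 n1); rewrite -/v1.
  by rewrite -(proj1_lem R (sp v1 v1) (sp v1 v2) (sp v2 v1) (sp v2 v2)) -Es mulrCA Hs mulr0.
have d2 : d * be2 R = 0.
  apply: (key _ psi2 n2); rewrite -/v2.
  by rewrite -(proj2_lem R (sp v1 v1) (sp v1 v2) (sp v2 v1) (sp v2 v2)) -Es mulrCA Hs mulr0.
have d0 : d = 0 by rewrite -[d]mulr1 -e1pe2 mulrDr d1 d2 addr0.
apply: conj_real; apply/eqP; rewrite -subr_eq0; exact/eqP.
Qed.
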